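(* Let $\mathcal{H}$ be a commutative Hopf algebra over a field $\mathbb{K}$. If $\mathcal{H}$ is semisimple, then $\mathcal{H}$ has enough cocommutative elements (i.e. $\mathcal{R}_{\mathcal{H}}^+\mathcal{H}=\mathcal{H}^+$) and $\mathcal{R}_{\mathcal{H}}$ is a semisimple $\mathbb{K}$-algebra.
   Context: With $\Delta(h)=\sum h_{(1)}\otimes h_{(2)}$ and counit $\varepsilon$: $\mathcal{H}^+=\ker\varepsilon$, $\mathcal{R}_{\mathcal{H}}=\{r\in\mathcal{H}:\sum r_{(1)}\otimes r_{(2)}=\sum r_{(2)}\otimes r_{(1)}\}$ (a subalgebra), $\mathcal{R}_{\mathcal{H}}^+=\mathcal{R}_{\mathcal{H}}\cap\mathcal{H}^+$. *)

(* Defs.v *)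
(* Hopf algebras over a field, without tensor-product library:
   an element of H (x) H is represented by a finite list of pairs
   [(a_1,b_1);...] standing for sum a_i (x) b_i; two lists represent the same
   tensor iff every bilinear form H x H -> K takes the same value on them
   (linear functionals on H (x) H = bilinear forms, and over a field linear
   functionals separate points).  Same for H (x) H (x) H with trilinear forms. *)
From HB Require Import structures.
From mathcomp Require Import all_boot all_order all_algebra.
Set Implicit Arguments. Unset Strict Implicit. Unset Printing Implicit Defensive.
Import Order.TTheory GRing.Theory.
Local Open Scope ring_scope.

Section Hopf.
Variables (K : fieldType) (H : comAlgType K).

Definition bilinear_form (f : H -> H -> K) : Prop :=
  (forall (a : K) (x y z : H), f (a *: x + y) z = a * f x z + f y z) /\
  (forall (a : K) (x y z : H), f z (a *: x + y) = a * f z x + f z y).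

Definition trilinear_form (f : H -> H -> H -> K) : Prop :=
  (forall (a : K) (x y u v : H), f (a *: x + y) u v = a * f x u v + f y u v) /\
  (forall (a : K) (x y u v : H), f u (a *: x + y) v = a * f u x v + f u y v) /\
  (forall (a : K) (x y u v : H), f u v (a *: x + y) = a * f u v x + f u v y).

Definition teq2 (s t : seq (H * H)) : Prop :=
  forall f, bilinear_form f ->
    \sum_(p <- s) f p.1 p.2 = \sum_(p <- t) f p.1 p.2.

Definition teq3 (s t : seq (H * H * H)) : Prop :=
  forall f, trilinear_form f ->
    \sum_(p <- s) f p.1.1 p.1.2 p.2 = \sum_(p <- t) f p.1.1 p.1.2 p.2.

Definition hopf_algebra (D : H -> seq (H * H)) (e : H -> K) (S : H -> H) : Prop :=
  [/\
      [/\ (forall (a : K) (x y : H),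
         teq2 (D (a *: x + y)) ([seq (a *: p.1, p.2) | p <- D x] ++ D y)),
      teq2 (D 1) [:: (1, 1)] &
      (forall x y : H,
         teq2 (D (x * y)) [seq (p.1 * q.1, p.2 * q.2) | p <- D x, q <- D y])],
      (forall h : H,
         teq3 [seq (q.1, q.2, p.2) | p <- D h, q <- D p.1]
              [seq (p.1, q.1, q.2) | p <- D h, q <- D p.2]),
      [/\ (forall (a : K) (x y : H), e (a *: x + y) = a * e x + e y),
          e 1 = 1, (forall x y : H, e (x * y) = e x * e y),
          (forall h : H, \sum_(p <- D h) e p.1 *: p.2 = h) &
          (forall h : H, \sum_(p <- D h) e p.2 *: p.1 = h)] &
      [/\ (forall (a : K) (x y : H), S (a *: x + y) = a *: S x + S y),
          (forall h : H, \sum_(p <- D h) S p.1 * p.2 = (e h)%:A) &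
          (forall h : H, \sum_(p <- D h) p.1 * S p.2 = (e h)%:A)]].

Definition augmentation (e : H -> K) (h : H) : Prop := e h = 0.

Definition cocomm (D : H -> seq (H * H)) (r : H) : Prop :=
  teq2 (D r) [seq (p.2, p.1) | p <- D r].

Definition cocomm_plus (D : H -> seq (H * H)) (e : H -> K) (r : H) : Prop :=
  cocomm D r /\ augmentation e r.

Definition cocomm_plus_H (D : H -> seq (H * H)) (e : H -> K) (x : H) : Prop :=
  exists s : seq (H * H),
    (forall p, p \in s -> cocomm_plus D e p.1) /\ x = \sum_(p <- s) p.1 * p.2.

Definition enough_cocommutative (D : H -> seq (H * H)) (e : H -> K) : Prop :=
  forall x : H, cocomm_plus_H D e x <-> augmentation e x.

End Hopf.

Section Semisimple.
Variable (R : pzRingType).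

Definition ideal_in (A I : R -> Prop) : Prop :=
  [/\ (forall x, I x -> A x), I 0,
      (forall x y, I x -> I y -> I (x + y)) &
      (forall a x, A a -> I x -> I (a * x))].

Definition semisimple_on (A : R -> Prop) : Prop :=
  forall I, ideal_in A I ->
    exists J, [/\ ideal_in A J,
                  (forall x, A x -> exists i j, [/\ I i, J j & x = i + j]) &
                  (forall x, I x -> J x -> x = 0)].

Definition semisimple_ring : Prop := semisimple_on (fun _ => True).
End Semisimple.

(* Main.v *)
Require Import Defs.
From mathcomp Require Import all_boot all_order all_algebra ring.
Set Implicit Arguments. Unset Strict Implicit. Unset Printing Implicit Defensive.
Import Order.TTheory GRing.Theory.
Local Open Scope ring_scope.

Section Forms.
Variables (K : fieldType) (H : comAlgType K).
Implicit Types (f : H -> H -> K) (s t u : seq (H * H)).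

Lemma fl0 f : bilinear_form f -> forall z, f 0 z = 0.
Proof. move=> [h1 h2] z; have := h1 1 0 0 z; rewrite scale1r addr0 mul1r.
by rewrite -{1}[f 0 z]addr0 => /addrI. Qed.
Lemma fr0 f : bilinear_form f -> forall z, f z 0 = 0.
Proof. move=> [h1 h2] z; have := h2 1 0 0 z; rewrite scale1r addr0 mul1r.
by rewrite -{1}[f z 0]addr0 => /addrI. Qed.
Lemma flD f : bilinear_form f -> forall x y z, f (x + y) z = f x z + f y z.
Proof. by move=> hf x y z; rewrite -[x]scale1r hf.1 mul1r scale1r. Qed.
Lemma frD f : bilinear_form f -> forall x y z, f z (x + y) = f z x + f z y.
Proof. by move=> hf x y z; rewrite -[x]scale1r hf.2 mul1r scale1r. Qed.
Lemma flZ f : bilinear_form f -> forall a x z, f (a *: x) z = a * f x z.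
Proof. by move=> hf a x z; rewrite -[a *: x]addr0 hf.1 fl0 // addr0. Qed.
Lemma frZ f : bilinear_form f -> forall a x z, f z (a *: x) = a * f z x.
Proof. by move=> hf a x z; rewrite -[a *: x]addr0 hf.2 fr0 // addr0. Qed.
Lemma flN f : bilinear_form f -> forall x z, f (- x) z = - f x z.
Proof. by move=> hf x z; rewrite -scaleN1r flZ // mulN1r. Qed.
Lemma frN f : bilinear_form f -> forall x z, f z (- x) = - f z x.
Proof. by move=> hf x z; rewrite -scaleN1r frZ // mulN1r. Qed.
Lemma flS f (I : Type) (s : seq I) (F : I -> H) z : bilinear_form f ->
  f (\sum_(i <- s) F i) z = \sum_(i <- s) f (F i) z.
Proof. move=> hf; elim: s => [|a s IH]; first by rewrite !big_nil fl0.
by rewrite !big_cons flD // IH. Qed.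
Lemma frS f (I : Type) (s : seq I) (F : I -> H) z : bilinear_form f ->
  f z (\sum_(i <- s) F i) = \sum_(i <- s) f z (F i).
Proof. move=> hf; elim: s => [|a s IH]; first by rewrite !big_nil fr0.
by rewrite !big_cons frD // IH. Qed.

Definition linH (g : H -> H) := forall (a : K) x y, g (a *: x + y) = a *: g x + g y.
Lemma linL a : linH (fun x => a * x).
Proof. by move=> c x y; rewrite mulrDr scalerAr. Qed.
Lemma linR a : linH (fun x => x * a).
Proof. by move=> c x y; rewrite mulrDl scalerAl. Qed.
Lemma linid : linH id. Proof. by []. Qed.

Lemma bilin_comp f (g1 g2 : H -> H) : bilinear_form f -> linH g1 -> linH g2 ->
  bilinear_form (fun x y => f (g1 x) (g2 y)).
Proof.
move=> hf h1 h2; split=> a x y z /=.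
  by rewrite h1 flD // flZ.
by rewrite h2 frD // frZ.
Qed.
Lemma bilin_swap f : bilinear_form f -> bilinear_form (fun x y => f y x).
Proof. by move=> [h1 h2]; split=> a x y z /=; rewrite ?h1 ?h2. Qed.
Lemma bilin_sum f (t : seq (H * H)) : bilinear_form f ->
  bilinear_form (fun x y => \sum_(q <- t) f (x * q.1) (y * q.2)).
Proof.
move=> hf; split=> a x y z /=; rewrite mulr_sumr -big_split; apply: eq_bigr => q _.
  by rewrite mulrDl -scalerAl flD // flZ.
by rewrite mulrDl -scalerAl frD // frZ.
Qed.

Definition mul2 (s t : seq (H * H)) := [seq (p.1 * q.1, p.2 * q.2) | p <- s, q <- t].
Definition sw (s : seq (H * H)) := [seq (p.2, p.1) | p <- s].

Lemma sum_mul2 (R : nmodType) (s t : seq (H * H)) (F : H * H -> R) :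
  \sum_(p <- mul2 s t) F p = \sum_(p <- s) \sum_(q <- t) F (p.1 * q.1, p.2 * q.2).
Proof. by rewrite /mul2 big_allpairs_dep. Qed.
Lemma sum_sw (R : nmodType) (s : seq (H * H)) (F : H * H -> R) :
  \sum_(p <- sw s) F p = \sum_(p <- s) F (p.2, p.1).
Proof. by rewrite /sw big_map. Qed.

Lemma teq2_refl s : teq2 s s. Proof. by []. Qed.
Lemma teq2_sym s t : teq2 s t -> teq2 t s. Proof. by move=> h f hf; rewrite h. Qed.
Lemma teq2_trans s t u : teq2 s t -> teq2 t u -> teq2 s u.
Proof. by move=> h1 h2 f hf; rewrite h1 // h2. Qed.

Lemma teq2_mulL s s' t : teq2 s s' -> teq2 (mul2 s t) (mul2 s' t).
Proof.
move=> h f hf; rewrite !sum_mul2 /=.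
exact: (h (fun x y => \sum_(q <- t) f (x * q.1) (y * q.2)) (bilin_sum t hf)).
Qed.
Lemma teq2_mulC s t : teq2 (mul2 s t) (mul2 t s).
Proof.
move=> f hf; rewrite !sum_mul2 /= exchange_big; apply: eq_bigr => p _.
by apply: eq_bigr => q _; rewrite [p.1 * _]mulrC [p.2 * _]mulrC.
Qed.
Lemma teq2_mulR s t t' : teq2 t t' -> teq2 (mul2 s t) (mul2 s t').
Proof.
move=> h; apply: teq2_trans (teq2_mulC _ _) _.
apply: teq2_trans (teq2_mulL _ h) (teq2_mulC _ _).
Qed.
Lemma teq2_mulA s t u : teq2 (mul2 (mul2 s t) u) (mul2 s (mul2 t u)).
Proof.
move=> f hf; rewrite !sum_mul2; apply: eq_bigr => p _.
rewrite sum_mul2; apply: eq_bigr => q _; apply: eq_bigr => r _.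
by rewrite /= !mulrA.
Qed.
Lemma teq2_sw s t : teq2 s t -> teq2 (sw s) (sw t).
Proof.
move=> h f hf; rewrite !sum_sw /=.
exact: (h (fun x y => f y x) (bilin_swap hf)).
Qed.
Lemma teq2_swmul s t : teq2 (sw (mul2 s t)) (mul2 (sw s) (sw t)).
Proof.
move=> f hf; rewrite sum_sw sum_mul2 sum_mul2 sum_sw; apply: eq_bigr => p _.
by rewrite sum_sw.
Qed.
Lemma teq2_swsw s : teq2 (sw (sw s)) s.
Proof. by move=> f hf; rewrite !sum_sw; apply: eq_bigr => -[]. Qed.

End Forms.
Section HopfS.
Variables (K : fieldType) (H : comAlgType K)
    (D : H -> seq (H * H)) (e : H -> K) (S : H -> H).
Hypothesis hH : hopf_algebra D e S.
Implicit Types (f : H -> H -> K) (s t u : seq (H * H)).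

Lemma D_lin a x y : teq2 (D (a *: x + y)) ([seq (a *: p.1, p.2) | p <- D x] ++ D y).
Proof. by case: hH => -[]. Qed.
Lemma D_1 : teq2 (D 1) [:: (1, 1)].
Proof. by case: hH => -[]. Qed.
Lemma D_mul x y : teq2 (D (x * y)) (mul2 (D x) (D y)).
Proof. by case: hH => -[]. Qed.
Lemma e_lin a x y : e (a *: x + y) = a * e x + e y.
Proof. by case: hH => _ _ [] . Qed.
Lemma e_1 : e 1 = 1. Proof. by case: hH => _ _ []. Qed.
Lemma e_mul x y : e (x * y) = e x * e y. Proof. by case: hH => _ _ []. Qed.
Lemma e_cl h : \sum_(p <- D h) e p.1 *: p.2 = h. Proof. by case: hH => _ _ []. Qed.
Lemma e_cr h : \sum_(p <- D h) e p.2 *: p.1 = h. Proof. by case: hH => _ _ []. Qed.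
Lemma S_lin a x y : S (a *: x + y) = a *: S x + S y. Proof. by case: hH => _ _ _ []. Qed.
Lemma S_l h : \sum_(p <- D h) S p.1 * p.2 = (e h)%:A. Proof. by case: hH => _ _ _ []. Qed.
Lemma S_r h : \sum_(p <- D h) p.1 * S p.2 = (e h)%:A. Proof. by case: hH => _ _ _ []. Qed.
Lemma coass h : teq3 [seq (q.1, q.2, p.2) | p <- D h, q <- D p.1]
              [seq (p.1, q.1, q.2) | p <- D h, q <- D p.2].
Proof. by case: hH. Qed.

Lemma e0 : e 0 = 0.
Proof. have := e_lin 1 0 0; rewrite scale1r addr0 mul1r.
by rewrite -{1}[e 0]addr0 => /addrI. Qed.
Lemma eD x y : e (x + y) = e x + e y.
Proof. by rewrite -[x]scale1r e_lin mul1r scale1r. Qed.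
Lemma eZ a x : e (a *: x) = a * e x.
Proof. by rewrite -[a *: x]addr0 e_lin e0 addr0. Qed.
Lemma eN x : e (- x) = - e x.
Proof. by rewrite -scaleN1r eZ mulN1r. Qed.
Lemma eB x y : e (x - y) = e x - e y.
Proof. by rewrite eD eN. Qed.
Lemma e_alg a : e (a%:A) = a.
Proof. by rewrite eZ e_1 mulr1. Qed.
Lemma eS (I : Type) (s : seq I) (F : I -> H) : e (\sum_(i <- s) F i) = \sum_(i <- s) e (F i).
Proof. elim: s => [|a s IH]; first by rewrite !big_nil e0. by rewrite !big_cons eD IH. Qed.

Lemma S0 : S 0 = 0.
Proof. have := S_lin 1 0 0; rewrite scale1r addr0 scale1r.
by rewrite -{1}[S 0]addr0 => /addrI. Qed.
Lemma SD x y : S (x + y) = S x + S y.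
Proof. by have := S_lin 1 x y; rewrite !scale1r. Qed.
Lemma SZ a x : S (a *: x) = a *: S x.
Proof. by rewrite -[a *: x]addr0 S_lin S0 addr0. Qed.
Lemma SS (I : Type) (s : seq I) (F : I -> H) : S (\sum_(i <- s) F i) = \sum_(i <- s) S (F i).
Proof. elim: s => [|a s IH]; first by rewrite !big_nil S0. by rewrite !big_cons SD IH. Qed.

Lemma sum_Dlin f a x y : bilinear_form f ->
  \sum_(p <- D (a *: x + y)) f p.1 p.2 =
  a * \sum_(p <- D x) f p.1 p.2 + \sum_(p <- D y) f p.1 p.2.
Proof.
move=> hf; rewrite (D_lin a x y hf) big_cat big_map /= mulr_sumr.
by congr (_ + _); apply: eq_bigr => p _; rewrite flZ.
Qed.
Lemma sum_D0 f : bilinear_form f -> \sum_(p <- D 0) f p.1 p.2 = 0.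
Proof.
move=> hf; have := sum_Dlin 1 0 0 hf; rewrite scale1r addr0 mul1r.
by rewrite -{1}[\sum_(p <- D 0) _]addr0 => /addrI.
Qed.
Lemma sum_DZ f a x : bilinear_form f ->
  \sum_(p <- D (a *: x)) f p.1 p.2 = a * \sum_(p <- D x) f p.1 p.2.
Proof. by move=> hf; rewrite -[a *: x]addr0 sum_Dlin // sum_D0 // addr0. Qed.

Lemma cocommP r : cocomm D r <->
  (forall f, bilinear_form f -> \sum_(p <- D r) f p.1 p.2 = \sum_(p <- D r) f p.2 p.1).
Proof. by split=> h f hf; rewrite h // sum_sw. Qed.

Lemma cocomm_lin a x y : cocomm D x -> cocomm D y -> cocomm D (a *: x + y).
Proof.
move=> /cocommP hx /cocommP hy; apply/cocommP => f hf.
rewrite sum_Dlin // (sum_Dlin _ _ _ (bilin_swap hf)) /=.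
by rewrite hx // hy.
Qed.
Lemma cocomm_1 : cocomm D 1.
Proof.
apply/cocommP => f hf; rewrite (D_1 hf) (D_1 (bilin_swap hf)).
by rewrite !big_cons !big_nil.
Qed.
Lemma cocomm_0 : cocomm D 0.
Proof. have -> : (0 : H) = (-1 : K) *: 1 + 1 by rewrite scaleN1r addNr.
by apply: cocomm_lin; apply: cocomm_1. Qed.
Lemma cocommD x y : cocomm D x -> cocomm D y -> cocomm D (x + y).
Proof. by move=> hx hy; rewrite -[x]scale1r; apply: cocomm_lin. Qed.
Lemma cocommN x : cocomm D x -> cocomm D (- x).
Proof. move=> h; have -> : - x = (-1 : K) *: x + 0 by rewrite scaleN1r addr0.
by apply: cocomm_lin => //; apply: cocomm_0. Qed.
Lemma cocommB x y : cocomm D x -> cocomm D y -> cocomm D (x - y).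
Proof. by move=> hx hy; apply: cocommD => //; apply: cocommN. Qed.
Lemma cocommM x y : cocomm D x -> cocomm D y -> cocomm D (x * y).
Proof.
move=> hx hy; rewrite /cocomm.
apply: teq2_trans (D_mul x y) _.
apply: teq2_trans (teq2_mulL _ hx) _.
apply: teq2_trans (teq2_mulR _ hy) _.
apply: teq2_trans (teq2_sym (teq2_swmul _ _)) _.
apply: teq2_sw; apply: teq2_sym; apply: D_mul.
Qed.

End HopfS.
Section Part2.
Variables (K : fieldType) (H : comAlgType K)
    (D : H -> seq (H * H)) (e : H -> K) (S : H -> H).
Hypothesis hH : hopf_algebra D e S.
Hypothesis hss : semisimple_ring H.

Lemma grpinv r : cocomm D r -> exists y, cocomm D y /\ r * (y * r) = r.
Proof.
move=> hr.
have idl : ideal_in (fun _ : H => True) (fun z => exists h, z = r * h).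
  split=> //; first by exists 0; rewrite mulr0.
    by move=> x y [h1 ->] [h2 ->]; exists (h1 + h2); rewrite mulrDr.
  by move=> a x _ [h ->]; exists (a * h); ring.
have [J [hJ hdec hint]] := hss idl.
have [a [b [[h ha] Jb e1]]] := hdec 1 Logic.I.
have rb : r * b = 0.
  apply: hint; first by exists b.
  by case: hJ => _ _ _ /(_ r b Logic.I Jb).
have rrh : r * (r * h) = r.
  transitivity (r * 1); last by rewrite mulr1.
  by rewrite e1 mulrDr rb addr0 ha.
set E := D (r * h).
have hR : teq2 (D r) (mul2 (D r) E) by rewrite -{1}rrh; exact: (D_mul hH).
have hE : teq2 E (mul2 (D r) (D h)) by exact: (D_mul hH).
have c1 : teq2 (mul2 E (sw E)) E.
  apply: teq2_trans (teq2_mulL _ hE) _.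
  apply: teq2_trans (teq2_mulA _ _ _) _.
  apply: teq2_trans (teq2_mulR _ (teq2_mulC _ _)) _.
  apply: teq2_trans (teq2_sym (teq2_mulA _ _ _)) _.
  apply: teq2_trans (teq2_mulL _ (teq2_mulL _ hr)) _.
  apply: teq2_trans (teq2_mulL _ (teq2_sym (teq2_swmul _ _))) _.
  apply: teq2_trans (teq2_mulL _ (teq2_sw (teq2_sym hR))) _.
  apply: teq2_trans (teq2_mulL _ (teq2_sym hr)) _.
  exact: teq2_sym.
have ecc : teq2 (sw E) E.
  apply: teq2_trans (teq2_sw (teq2_sym c1)) _.
  apply: teq2_trans (teq2_swmul _ _) _.
  apply: teq2_trans (teq2_mulR _ (teq2_swsw _)) _.
  exact: teq2_trans (teq2_mulC _ _) c1.
set y := h * (r * h).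
have ry : r * y = r * h.
  by rewrite /y -[in RHS]rrh; ring.
have ye : y * (r * h) = y.
  by rewrite /y -[in RHS]rrh; ring.
have hE2 : teq2 E (mul2 (D r) (D y)) by rewrite /E -ry; exact: (D_mul hH).
have hY : teq2 (D y) (mul2 (D y) E) by rewrite -{1}ye; exact: (D_mul hH).
exists y; split; last first.
  by rewrite mulrA ry mulrC.
rewrite /cocomm.
eapply teq2_trans; first exact hY.
apply: teq2_trans (teq2_mulR _ (teq2_sym ecc)) _.
apply: teq2_trans (teq2_mulR _ (teq2_sw hE2)) _.
apply: teq2_trans (teq2_mulR _ (teq2_swmul _ _)) _.
apply: teq2_trans (teq2_mulR _ (teq2_mulL _ (teq2_sym hr))) _.
apply: teq2_trans (teq2_sym (teq2_mulA _ _ _)) _.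
apply: teq2_trans (teq2_mulL _ (teq2_mulC _ _)) _.
apply: teq2_trans (teq2_mulL _ (teq2_sym hE2)) _.
apply: teq2_trans (teq2_mulC _ _) _.
apply: teq2_trans (teq2_mulR _ (teq2_sym ecc)) _.
apply: teq2_trans (teq2_sym (teq2_swmul _ _)) _.
exact: teq2_sw (teq2_sym hY).
Qed.


Lemma fold_idem (I : H -> Prop) : ideal_in (cocomm D) I ->
  forall s : seq H, (forall z, z \in s -> I z) ->
  exists f, I f /\ (forall z, z \in s -> z * f = z).
Proof.
move=> [IR I0 IDc IM]; elim=> [|r s IH] hs.
  by exists 0; split.
have [f1 [If1 hf1]] : exists f, I f /\ (forall z, z \in s -> z * f = z).
  by apply: IH => z zs; apply: hs; rewrite in_cons zs orbT.
have Ir : I r by apply: hs; rewrite mem_head.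
have [y [cy ry]] := grpinv (IR _ Ir).
have Ie : I (y * r) by apply: IM.
have Ife : I ((- f1) * (y * r)) by apply: IM => //; exact: (cocommN hH (IR _ If1)).
exists (f1 + (y * r + (- f1) * (y * r))); split; first by apply: (IDc) => //; apply: (IDc).
have key : forall z, z * (f1 + (y * r + (- f1) * (y * r))) = z * f1 + z * (y * r) - z * f1 * (y * r).
  by move=> z; ring.
move=> z; rewrite in_cons => /orP [/eqP -> | zs].
  rewrite key ry; have -> : r * f1 * (y * r) = r * f1 by rewrite -mulrA [f1 * _]mulrC mulrA ry.
  by rewrite addrAC subrr add0r.
by rewrite key hf1 // addrK.
Qed.


Lemma part2 : semisimple_on (cocomm D).
Proof.
move=> I hI; have [IR I0 IDc IM] := hI.
pose IH := fun z : H => exists s : seq (H * H), (forall p, p \in s -> I p.1) /\ z = \sum_(p <- s) p.1 * p.2.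
have idl : ideal_in (fun _ : H => True) IH.
  split=> //; first by exists [::]; rewrite big_nil.
    move=> x y [s1 [h1 ->]] [s2 [h2 ->]]; exists (s1 ++ s2); split; last by rewrite big_cat.
    by move=> p; rewrite mem_cat => /orP [/h1|/h2].
  move=> a x _ [s1 [h1 ->]]; exists [seq (p.1, a * p.2) | p <- s1]; split.
    by move=> p /mapP [q qs ->]; exact: (h1 _ qs).
  by rewrite big_map mulr_sumr; apply: eq_bigr => p _ /=; ring.
have [J [hJ hdec hint]] := hss idl.
have [u [v [[s [hs hu]] Jv e1]]] := hdec 1 Logic.I.
have xu : forall x, I x -> x * u = x.
  move=> x Ix; have xv : x * v = 0.
    apply: hint; last by case: hJ => _ _ _ /(_ x v Logic.I Jv).
    exists [:: (x, v)]; split; last by rewrite big_cons big_nil addr0.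
    by move=> p; rewrite mem_seq1 => /eqP ->.
  transitivity (x * 1); last by rewrite mulr1.
  by rewrite e1 mulrDr xv addr0.
have hs' : forall z, z \in [seq p.1 | p <- s] -> I z.
  by move=> z /mapP [p ps ->]; exact: hs.
have [f [If hf]] := fold_idem hI hs'.
have uf : u * f = u.
  rewrite hu mulr_suml; apply: eq_big_seq => p ps.
  by rewrite mulrAC hf //; apply: (map_f (fun q : H * H => q.1)).
have xf : forall x, I x -> x * f = x.
  by move=> x Ix; rewrite -{1}(xu x Ix) -mulrA uf xu.
have cf : cocomm D f := IR _ If.
have ff : f * f = f := xf _ If.
exists (fun z => cocomm D z /\ z * f = 0); split.
- split.
  + by move=> x [].
  + by split; [exact: (cocomm_0 hH) | rewrite mul0r].
  + move=> x y [cx hx] [cy hy]; split; first exact: (cocommD hH).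
    by rewrite mulrDl hx hy addr0.
  + move=> a x ca [cx hx]; split; first exact: (cocommM hH).
    by rewrite -mulrA hx mulr0.
- move=> x cx; exists (x * f), (x - x * f); split.
  + by apply: IM.
  + split; first by apply: (cocommB hH) => //; apply: (cocommM hH).
    by rewrite mulrBl -mulrA ff subrr.
  + by rewrite addrC subrK.
- by move=> x Ix [_ h]; rewrite -(xf x Ix).
Qed.

End Part2.
Section Part1.
Variables (K : fieldType) (H : comAlgType K)
    (D : H -> seq (H * H)) (e : H -> K) (S : H -> H).
Hypothesis hH : hopf_algebra D e S.

Lemma Lint j (hj : forall h, h * j = e h *: j) h f : bilinear_form f ->
  \sum_(p <- D j) f (h * p.1) p.2 = \sum_(p <- D j) f p.1 (S h * p.2).
Proof.
move=> hf.
pose F u v w := \sum_(y <- D j) f (u * y.1) (S w * (v * y.2)).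
have trF : trilinear_form F.
  split; [|split] => a x y u v; rewrite /F mulr_sumr -big_split; apply: eq_bigr => q _ /=.
  - by rewrite mulrDl -scalerAl flD // flZ.
  - by rewrite mulrDl -scalerAl mulrDr -scalerAr frD // frZ.
  - by rewrite (S_lin hH) mulrDl -scalerAl frD // frZ.
have co := coass hH h trF.
rewrite !big_allpairs_dep /= in co.
have R1 : \sum_(p <- D h) \sum_(q <- D p.2) F p.1 q.1 q.2 = \sum_(y <- D j) f (h * y.1) y.2.
  transitivity (\sum_(p <- D h) \sum_(y <- D j) f ((e p.2 *: p.1) * y.1) y.2).
    apply: eq_bigr => p _; rewrite /F exchange_big; apply: eq_bigr => y _ /=.
    rewrite -frS //.
    have -> : \sum_(q <- D p.2) S q.2 * (q.1 * y.2) = e p.2 *: y.2.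
      rewrite -mulr_algl -(S_r hH) mulr_suml; apply: eq_bigr => q _; ring.
    by rewrite frZ // -scalerAl flZ.
  rewrite exchange_big; apply: eq_bigr => y _ /=.
  by rewrite -flS // -mulr_suml (e_cr hH).
have L1 : \sum_(p <- D h) \sum_(q <- D p.1) F q.1 q.2 p.2 = \sum_(y <- D j) f y.1 (S h * y.2).
  transitivity (\sum_(p <- D h) \sum_(z <- D (p.1 * j)) f z.1 (S p.2 * z.2)).
    apply: eq_bigr => p _.
    have hg : bilinear_form (fun x y => f x (S p.2 * y)).
      exact: (@bilin_comp _ _ f id (fun y => S p.2 * y) hf (@linid _ _) (linL _)).
    by rewrite (D_mul hH p.1 j hg) sum_mul2.
  transitivity (\sum_(p <- D h) e p.1 * \sum_(z <- D j) f z.1 (S p.2 * z.2)).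
    apply: eq_bigr => p _.
    have hg : bilinear_form (fun x y => f x (S p.2 * y)).
      exact: (@bilin_comp _ _ f id (fun y => S p.2 * y) hf (@linid _ _) (linL _)).
    by rewrite hj (sum_DZ hH _ _ hg).
  under eq_bigr do rewrite mulr_sumr.
  rewrite exchange_big; apply: eq_bigr => z _ /=.
  rewrite -[in RHS](e_cl hH h) (SS hH) mulr_suml frS //; apply: eq_bigr => p _.
  by rewrite (SZ hH) -scalerAl frZ.
by rewrite -R1 -L1 co.
Qed.


Lemma cocomm_int j (hj : forall h, h * j = e h *: j) (ej : e j = 1) : cocomm D j.
Proof.
apply/cocommP => f hf.
pose Y := \sum_(q <- D j) \sum_(p <- D j) f (q.2 * p.1) (p.2 * q.1).
have W2 : Y = \sum_(p <- D j) f p.1 p.2.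
  transitivity (\sum_(q <- D j) \sum_(p <- D j) f p.1 (S q.2 * p.2 * q.1)).
    apply: eq_bigr => q _.
    have hg : bilinear_form (fun x y => f x (y * q.1)).
      exact: (@bilin_comp _ _ f id (fun y => y * q.1) hf (@linid _ _) (linR _)).
    exact: (Lint hj q.2 hg).
  rewrite exchange_big; apply: eq_bigr => p _ /=.
  rewrite -frS //; congr (f _ _).
  rewrite -[RHS]mul1r -[1](scale1r (1 : H)) -ej -(S_r hH) mulr_suml.
  by apply: eq_bigr => q _; ring.
have W1 : Y = \sum_(q <- D j) f q.2 q.1.
  rewrite /Y exchange_big /=.
  transitivity (\sum_(p <- D j) \sum_(q <- D j) f (S p.2 * q.2 * p.1) q.1).
    apply: eq_bigr => p _.
    have hg : bilinear_form (fun x y => f (y * p.1) x).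
      exact: (bilin_swap (@bilin_comp _ _ f (fun x => x * p.1) id hf (linR _) (@linid _ _))).
    have := Lint hj p.2 hg; rewrite /= => <-.
    by apply: eq_bigr => q _; rewrite [q.2 * _]mulrC.
  rewrite exchange_big; apply: eq_bigr => q _ /=.
  rewrite -flS //; congr (f _ _).
  rewrite -[RHS]mul1r -[1](scale1r (1 : H)) -ej -(S_r hH) mulr_suml.
  by apply: eq_bigr => p _; ring.
by rewrite -W1 -W2.
Qed.

End Part1.
Theorem proposition2p31 (K : fieldType) (H : comAlgType K)
    (D : H -> seq (H * H)) (e : H -> K) (S : H -> H) :
  hopf_algebra D e S ->
  semisimple_ring H ->
  enough_cocommutative D e /\ semisimple_on (cocomm D).
Proof.
move=> hH hss; split; last exact: (part2 hH hss).
have idl : ideal_in (fun _ : H => True) (augmentation e).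
  rewrite /augmentation; split=> //; first exact: (e0 hH).
    by move=> x y hx hy; rewrite (eD hH) hx hy addr0.
  by move=> a x _ hx; rewrite (e_mul hH) hx mulr0.
have [J [hJ hdec hint]] := hss _ idl.
have [i [j [ei Jj e1]]] := hdec 1 Logic.I.
have hj : forall h, h * j = e h *: j.
  move=> h; apply/eqP; rewrite -subr_eq0 -mulr_algl -mulrBl; apply/eqP; apply: hint.
    by rewrite /augmentation (e_mul hH) (eB hH) (e_alg hH) subrr mul0r.
  by case: hJ => _ _ _; apply.
have ej : e j = 1 by rewrite -(e_1 hH) e1 (eD hH) ei add0r.
have cj := cocomm_int hH hj ej.
have ci : cocomm D i.
  have -> : i = (-1 : K) *: j + 1 by rewrite scaleN1r addrC e1 addrK.
  exact: (cocomm_lin hH _ cj (cocomm_1 hH)).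
move=> x; split.
  move=> [s [hs ->]]; rewrite /augmentation (eS hH) big1_seq // => p /andP [_ ps].
  by rewrite (e_mul hH) (hs p ps).2 mul0r.
move=> ex; exists [:: (i, x)]; split.
  by move=> p; rewrite mem_seq1 => /eqP ->; split.
rewrite big_cons big_nil addr0 /=.
transitivity (x * 1); first by rewrite mulr1.
by rewrite e1 mulrDr hj ex scale0r addr0 mulrC.
Qed.
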